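(* Let $F:\mathbb{R}^p\to\mathbb{R}^p$ be single-valued, let $\kappa_1,\kappa_2\ge0$, $\beta\in(0,1]$, $\eta>0$, and let $\{(x^k,y^k)\}$ be generated by: start from $x^0\in\mathrm{dom}\,F$, set $x^{-1}=y^{-1}:=x^0$, and for $k\ge0$ $$y^k:=x^k-\tfrac{\eta}{\beta}u^k,\qquad x^{k+1}:=x^k-\eta Fy^k,$$ where $u^k\in\mathbb{R}^p$ satisfies $\|Fx^k-u^k\|^2\le\kappa_1\|Fx^k-Fy^{k-1}\|^2+\kappa_2\|Fx^k-Fx^{k-1}\|^2$. Then for any $\gamma>0$, any $\hat x\in\mathrm{dom}\,F$ and any $k\ge0$, $$\begin{aligned}\|x^{k+1}-\hat x\|^2\le{}&\|x^k-\hat x\|^2-\beta\|y^k-x^k\|^2+\tfrac{\eta^2}{\gamma}\|Fy^k-u^k\|^2-2\eta\langle Fy^k,y^k-\hat x\rangle\\&-(\beta-\gamma)\|x^{k+1}-y^k\|^2-(1-\beta)\|x^{k+1}-x^k\|^2.\end{aligned}$$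
   Context: $\|\cdot\|$, $\langle\cdot,\cdot\rangle$ are the Euclidean norm and inner product. *)

(* Defs.v *)
From mathcomp Require Import all_boot all_order all_algebra.
From mathcomp Require Import reals.
Set Implicit Arguments. Unset Strict Implicit. Unset Printing Implicit Defensive.
Import Order.TTheory GRing.Theory Num.Theory.
Local Open Scope ring_scope.

Definition dotp (R : realType) (p : nat) (u v : 'rV[R]_p) : R :=
  \sum_(i < p) u ord0 i * v ord0 i.

Definition sqnorm (R : realType) (p : nat) (u : 'rV[R]_p) : R := dotp u u.

(* previous iterate with the convention  z^{-1} := x^0 *)
Definition prev_it (R : realType) (p : nat) (x0 : 'rV[R]_p) (z : nat -> 'rV[R]_p)
  (k : nat) : 'rV[R]_p :=
  if k is k'.+1 then z k' else x0.

(* Main.v *)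
Require Import Defs.
From mathcomp Require Import all_boot all_order all_algebra.
From mathcomp Require Import reals.
From mathcomp Require Import ring lra.
Import Order.TTheory GRing.Theory Num.Theory.
Local Open Scope ring_scope.

Lemma scal (R : realType) (a b c v w xh eta beta gamma : R) :
  0 < beta -> 0 < eta -> 0 < gamma ->
  b = a - eta * v -> c = a - eta / beta * w ->
  (b - xh) * (b - xh) <=
  (a - xh) * (a - xh) - beta * ((c - a) * (c - a))
  + eta ^+ 2 / gamma * ((v - w) * (v - w))
  - 2 * eta * (v * (c - xh))
  - (beta - gamma) * ((b - c) * (b - c))
  - (1 - beta) * ((b - a) * (b - a)).
Proof.
move=> hb he hg -> ->.
set e := eta * v. set d := eta / beta * w.
have hw : eta * w = beta * d by rewrite /d; field; by rewrite gt_eqF.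
set t := gamma * (e - d) - (e - beta * d).
rewrite -subr_ge0.
have -> : (a - xh) * (a - xh) - beta * ((a - d - a) * (a - d - a)) +
  eta ^+ 2 / gamma * ((v - w) * (v - w)) - 2 * eta * (v * (a - d - xh)) -
  (beta - gamma) * ((a - e - (a - d)) * (a - e - (a - d))) -
  (1 - beta) * ((a - e - a) * (a - e - a)) - (a - e - xh) * (a - e - xh)
  = t ^+ 2 / gamma.
  have -> : eta ^+ 2 / gamma * ((v - w) * (v - w)) = (e - beta * d) ^+ 2 / gamma.
    by rewrite -hw /e; field; by rewrite gt_eqF.
  rewrite /t /e; field; by rewrite gt_eqF.
by apply: divr_ge0; [apply: sqr_ge0 | apply: ltW].
Qed.

Theorem lemma1 (R : realType) (p : nat) (F : 'rV[R]_p -> 'rV[R]_p)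
  (domF : 'rV[R]_p -> Prop) (kappa1 kappa2 beta eta : R)
  (x y u : nat -> 'rV[R]_p) :
  0 <= kappa1 -> 0 <= kappa2 -> 0 < beta -> beta <= 1 -> 0 < eta ->
  domF (x 0%N) ->
  (forall k : nat, y k = x k - (eta / beta) *: u k) ->
  (forall k : nat, x k.+1 = x k - eta *: F (y k)) ->
  (forall k : nat,
     sqnorm (F (x k) - u k) <=
       kappa1 * sqnorm (F (x k) - F (prev_it (x 0%N) y k))
     + kappa2 * sqnorm (F (x k) - F (prev_it (x 0%N) x k))) ->
  forall (gamma : R) (xhat : 'rV[R]_p) (k : nat),
    0 < gamma -> domF xhat ->
    sqnorm (x k.+1 - xhat) <=
      sqnorm (x k - xhat) - beta * sqnorm (y k - x k)
      + eta ^+ 2 / gamma * sqnorm (F (y k) - u k)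
      - 2 * eta * dotp (F (y k)) (y k - xhat)
      - (beta - gamma) * sqnorm (x k.+1 - y k)
      - (1 - beta) * sqnorm (x k.+1 - x k).
Proof.
move=> _ _ hb _ he _ hy hx _ gamma xhat k hg _.
rewrite /sqnorm /dotp !mulr_sumr -!sumrB -big_split /= -!sumrB.
apply: ler_sum => i _.
rewrite !mxE.
apply: scal => //.
- by rewrite hx !mxE.
- by rewrite hy !mxE.
Qed.
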